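(* Let $\tilde{H}\in\mathbb{C}^{K\times L}$, let $\tau_1,\dots,\tau_L\ge0$ be the eigenvalues of $\tilde{H}^\dagger\tilde{H}$, let $N\ge1$, and let $G\in\mathbb{C}^{N\times N}$ be a Hermitian positive definite matrix. Let $W=(\tilde{H}^\dagger\tilde{H})\otimes I_N$ and let $W=V_W\Lambda_W V_W^\dagger$ be an eigendecomposition with $V_W$ unitary and $\Lambda_W$ diagonal whose $j$-th diagonal entry is $\tau_{\lceil j/N\rceil}$, $j=1,\dots,NL$. Let $\sigma_0^2>0$, $\mu>0$, and $\bar{\alpha}_j=\sigma_0^2\big(\frac1\mu-\frac{1}{\tau_{\lceil j/N\rceil}}\big)^+$ for $j=1,\dots,NL$, and put $\bar{K}=V_W\,\mathrm{diag}(\bar{\alpha}_1,\dots,\bar{\alpha}_{NL})\,V_W^\dagger$. Then the matrix $\bar{\Sigma}_A=(I_L\otimes G)^{-1}\bar{K}$ is Hermitian and positive semidefinite (hence a valid covariance matrix).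
   Context: Notation: $\dagger$ is conjugate transpose, $\otimes$ the Kronecker product, $I_n$ the $n\times n$ identity, $(a)^+=\max(a,0)$ with the convention $(\frac1\mu-\frac10)^+=0$, $\lceil\cdot\rceil$ the ceiling. In the paper's application, $G$ is the Toeplitz matrix $(G)_{n,m}=g((n-m)\delta T)$ of samples of a raised cosine pulse and $\mu$ is fixed by a power constraint, but the conclusion is stated for the matrices as given. *)

(* Defs.v *)
From mathcomp Require Import all_boot all_order all_algebra.
From mathcomp Require mxtens.
Set Implicit Arguments. Unset Strict Implicit. Unset Printing Implicit Defensive.
Import Order.TTheory GRing.Theory Num.Theory.
Local Open Scope ring_scope.
Local Open Scope sesquilinear_scope.

(* Kronecker product A (x) B, with the standard index convention
   (A (x) B)_{i*p+k, j*q+l} = A_{i,j} B_{k,l} (mxtens_index). *)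
Notation kron A B := (mxtens.tensmx A B).

Notation "M ^H" := (M ^t*) (at level 30, format "M ^H").

Definition psdmx {C : numClosedFieldType} {n : nat} (A : 'M[C]_n) : Prop :=
  A \is hermsymmx /\ forall v : 'rV[C]_n, 0 <= (v *m A *m v ^t*) 0 0.

Definition pdmx {C : numClosedFieldType} {n : nat} (A : 'M[C]_n) : Prop :=
  A \is hermsymmx /\ forall v : 'rV[C]_n, v != 0 -> 0 < (v *m A *m v ^t*) 0 0.

(* (1/mu - 1/t)^+ with the convention (1/mu - 1/0)^+ = 0. *)
Definition posp_inv {C : numClosedFieldType} (mu t : C) : C :=
  if t == 0 then 0
  else if 0 <= mu^-1 - t^-1 then mu^-1 - t^-1 else 0.

(* For the 0-based index j of 'I_(L*N), the block index j %/ N : 'I_L,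
   i.e. ceil(j'/N) for the 1-based index j' = j+1 (shifted to 0-based). *)
Definition blk {L N : nat} (j : 'I_(L * N)) : 'I_L := (mxtens.mxtens_unindex j).1.

(* Main.v *)
Require Import Defs.
From mathcomp Require Import all_boot all_order all_algebra.
From mathcomp Require Import mxtens.
Import Order.TTheory GRing.Theory Num.Theory.
Local Open Scope ring_scope.
Local Open Scope sesquilinear_scope.

Section H.
Variable C : numClosedFieldType.

Lemma herm_of (n : nat) (M : 'M[C]_n) : M^t* = M -> M \is hermsymmx.
Proof. by move=> h; rewrite is_hermitianmxE expr0 scale1r h. Qed.

Lemma herm_eq (n : nat) (M : 'M[C]_n) : M \is hermsymmx -> M^t* = M.
Proof. by move/is_hermitianmxP; rewrite expr0 scale1r => <-. Qed.

Lemma tens11 m n : (1%:M : 'M[C]_m) *t (1%:M : 'M[C]_n) = 1%:M.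
Proof.
apply/matrixP=> i j.
case: (mxtens_indexP i)=> i0 i1; case: (mxtens_indexP j)=> j0 j1.
rewrite tensmxE !mxE (can_eq (@mxtens_indexK m n)) xpair_eqE.
by case: (i0 == j0); case: (i1 == j1); rewrite /= ?mulr1 ?mul0r ?mulr0.
Qed.

Lemma conjT m n p q (A : 'M[C]_(m, n)) (B : 'M[C]_(p, q)) :
  (A *t B)^t* = A^t* *t B^t*.
Proof. by apply/matrixP=> i j; rewrite !mxE rmorphM. Qed.

Lemma formE p (x y : 'rV[C]_p) (A : 'M[C]_p) :
  (x *m A *m y^t*) 0 0 = \sum_a \sum_b x 0 a * A a b * (y 0 b)^*.
Proof.
rewrite [LHS]mxE exchange_big /=; apply: eq_bigr => b _.
by rewrite !mxE mulr_suml; apply: eq_bigr => a _.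
Qed.

Lemma sum_tens m n (F : 'I_(m * n) -> C) :
  \sum_a F a = \sum_(i < m) \sum_(k < n) F (mxtens_index (i, k)).
Proof.
rewrite pair_big /=.
rewrite (reindex (@mxtens_index m n)) /=; last first.
  by exists (@mxtens_unindex m n) => x _; [apply: mxtens_indexK|apply: mxtens_unindexK].
by apply: eq_bigr => -[i k] _.
Qed.

Lemma psd_tens m n (G : 'M[C]_n) :
  (forall v : 'rV[C]_n, 0 <= (v *m G *m v ^t*) 0 0) ->
  forall x : 'rV[C]_(m * n), 0 <= (x *m (1%:M *t G) *m x^t*) 0 0.
Proof.
move=> hG x; rewrite formE sum_tens.
have -> : \sum_(i < m) \sum_(k < n) \sum_b x 0 (mxtens_index (i, k)) * (1%:M *t G) (mxtens_index (i, k)) b * (x 0 b)^*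
  = \sum_(i < m) ((\row_k x 0 (mxtens_index (i, k))) *m G *m (\row_k x 0 (mxtens_index (i, k)))^t*) 0 0.
  apply: eq_bigr => i _; rewrite formE; apply: eq_bigr => k _.
  rewrite sum_tens (bigD1 i) //= [X in _ + X]big1 ?addr0; last first.
    move=> j /negPf nij; apply: big1 => l _.
    by rewrite tensmxE mxE eq_sym nij mulr0n mul0r mulr0 mul0r.
  by apply: eq_bigr => l _; rewrite tensmxE !mxE eqxx mulr1n mul1r.
by apply: sumr_ge0 => i _; apply: hG.
Qed.

Lemma conj_mul m n p (A : 'M[C]_(m, n)) (B : 'M[C]_(n, p)) :
  (A *m B)^t* = B^t* *m A^t*.
Proof. by rewrite trmx_mul map_mxM. Qed.

Lemma diag_conj n (d : 'rV[C]_n) : (forall j, 0 <= d 0 j) ->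
  (diag_mx d)^t* = diag_mx d.
Proof.
move=> hd; apply/matrixP=> i j; rewrite !mxE.
case: (eqVneq j i) => [->|ne]; first by rewrite !mulr1n geC0_conj.
by rewrite /= conjC0.
Qed.

Lemma posp_ge0 (mu t : C) : 0 <= posp_inv mu t.
Proof. by rewrite /posp_inv; case: eqP => //; case: ifP. Qed.

End H.

Theorem lemma5 (C : numClosedFieldType) (k L N : nat) (H : 'M[C]_(k, L))
  (tau : 'I_L -> C)
  (htau_eig : char_poly (H ^t* *m H) = \prod_(i < L) ('X - (tau i)%:P))
  (htau_ge0 : forall i, 0 <= tau i)
  (hN : (1 <= N)%N)
  (G : 'M[C]_N) (hG : pdmx G)
  (V : 'M[C]_(L * N)) (hV : V \is unitarymx)
  (hW : kron (H ^t* *m H) (1%:M : 'M[C]_N)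
        = V *m diag_mx (\row_j tau (blk j)) *m V ^t*)
  (sigma02 mu : C) (hsigma : 0 < sigma02) (hmu : 0 < mu) :
  let alpha := \row_(j < L * N) (sigma02 * posp_inv mu (tau (blk j))) in
  let Kbar := V *m diag_mx alpha *m V ^t* in
  let SigmaA := invmx (kron (1%:M : 'M[C]_L) G) *m Kbar in
  SigmaA \is hermsymmx /\ psdmx SigmaA.
Proof.
move=> alpha Kbar SigmaA.
set T := kron (1%:M : 'M[C]_L) G.
set W := kron (H ^t* *m H) (1%:M : 'M[C]_N).
set D := diag_mx _ in hW.
set S := invmx T.
have hVV : V *m V^t* = 1%:M by apply/unitarymxP.
have hVV' : V^t* *m V = 1%:M by apply: mulmx1C.
have hGh : G^t* = G by apply: herm_eq; case: hG.
have hGpsd : forall v : 'rV[C]_N, 0 <= (v *m G *m v ^t*) 0 0.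
  move=> v; have [->|v0] := eqVneq v 0; first by rewrite !mul0mx mxE.
  by apply: ltW; case: hG => _ /(_ v v0).
have Gu : G \in unitmx.
  rewrite unitmxE unitfE; apply/negP => /det0P [v v0 vG].
  by case: hG => _ /(_ v v0); rewrite vG !mul0mx mxE ltxx.
have Tu : T \in unitmx.
  have : (1%:M *t invmx G) *m T = 1%:M.
    by rewrite /T tensmx_mul mul1mx mulVmx // tens11.
  by case/mulmx1_unit.
have ST : S *m T = 1%:M by apply: mulVmx.
have TS : T *m S = 1%:M by apply: mulmxV.
have Th : T^t* = T by rewrite /T conjT hGh herm_eq //; apply: hermitian1mx_subproof.
have Sh : S^t* = S by rewrite /S trmx_inv map_invmx Th.
have TW : T *m W = W *m T by rewrite /T /W !tensmx_mul !mul1mx !mulmx1.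
have SW : S *m W = W *m S.
  by rewrite -[S *m W]mulmx1 -TS !mulmxA -[S *m W *m T]mulmxA -TW mulmxA ST mul1mx.
have hD : D = V^t* *m W *m V.
  by rewrite /W hW !mulmxA hVV' mul1mx -mulmxA hVV' mulmx1.
set B := V^t* *m S *m V.
have hS : S = V *m B *m V^t*.
  by rewrite /B !mulmxA hVV mul1mx -mulmxA hVV mulmx1.
have cp : forall X Y : 'M[C]_(L * N),
    V^t* *m X *m V *m (V^t* *m Y *m V) = V^t* *m (X *m Y) *m V.
  by move=> X Y; rewrite !mulmxA -[V^t* *m X *m V *m V^t*]mulmxA hVV mulmx1.
have cp2 : forall X Y : 'M[C]_(L * N),
    V *m X *m V^t* *m (V *m Y *m V^t*) = V *m (X *m Y) *m V^t*.
  by move=> X Y; rewrite !mulmxA -[V *m X *m V^t* *m V]mulmxA hVV' mulmx1.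
have BD : B *m D = D *m B by rewrite hD /B !cp SW.
have hB : B = V^t* *m S *m V by [].
clearbody B.
have Bd : forall i j, B i j != 0 -> tau (blk i) = tau (blk j).
  move=> i j nz; have := congr1 (fun M : 'M[C]_(L * N) => M i j) BD.
  rewrite /D mul_mx_diag mul_diag_mx !mxE => e.
  by apply: (mulfI nz); rewrite e; apply: mulrC.
have alpha_ge0 : forall j, 0 <= alpha 0 j.
  by move=> j; rewrite mxE; apply: mulr_ge0; [exact: ltW | exact: posp_ge0].
set q := \row_j sqrtC (alpha 0 j).
have Halpha : forall i j, B i j * alpha 0 j = alpha 0 i * B i j.
  move=> i j; case: (eqVneq (B i j) 0) => [->|nz]; first by rewrite mul0r mulr0.
  by rewrite !mxE (Bd _ _ nz) mulrC.
have Hq : forall i j, B i j * alpha 0 j = q 0 i * B i j * q 0 j.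
  move=> i j; case: (eqVneq (B i j) 0) => [->|nz]; first by rewrite mul0r mulr0 mul0r.
  by rewrite !mxE (Bd _ _ nz) mulrAC -expr2 sqrtCK mulrC.
have BE : B *m diag_mx alpha = diag_mx alpha *m B.
  by apply/matrixP => i j; rewrite mul_mx_diag mul_diag_mx [LHS]mxE [RHS]mxE; apply: Halpha.
have BQ : B *m diag_mx alpha = diag_mx q *m B *m diag_mx q.
  by apply/matrixP => i j; rewrite !mul_mx_diag mul_diag_mx [LHS]mxE [RHS]mxE [X in _ = X * _]mxE; apply: Hq.
have Qh : (diag_mx q)^t* = diag_mx q.
  by apply: diag_conj => j; rewrite mxE sqrtC_ge0.
have Kh : Kbar^t* = Kbar.
  by rewrite /Kbar !conj_mul trmxCK diag_conj // mulmxA.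
have SK : S *m Kbar = Kbar *m S by rewrite hS /Kbar !cp2 BE.
have herm : SigmaA \is hermsymmx.
  by apply: herm_of; rewrite /SigmaA -/S conj_mul Kh Sh SK.
split => //; split => // v.
rewrite /SigmaA -/S hS /Kbar cp2 BQ.
have -> : v *m (V *m (diag_mx q *m B *m diag_mx q) *m V^t*) *m v^t*
    = (v *m V *m diag_mx q) *m B *m (v *m V *m diag_mx q)^t*.
  by rewrite !conj_mul Qh !mulmxA.
set u := v *m V *m diag_mx q.
have -> : u *m B *m u^t* = (u *m V^t*) *m S *m (u *m V^t*)^t*.
  by rewrite conj_mul trmxCK hB !mulmxA.
set x := u *m V^t*.
have -> : x *m S *m x^t* = (x *m S) *m T *m (x *m S)^t*.
  by rewrite conj_mul Sh !mulmxA -[x *m S *m T *m S]mulmxA TS mulmx1.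
exact: psd_tens.
Qed.
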